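(* Let $\Omega\subseteq\mathbb{R}^n$ be open. A function $f\in\mathbb{A}(\Omega)$ is D-continuous if and only if $G(f)=f$, where $G(f)=[I(S(I(f))),S(I(S(f)))]$.
   Context: $\overline{\mathbb{R}}=\mathbb{R}\cup\{\pm\infty\}$, $\mathbb{I}\overline{\mathbb{R}}$ is the set of closed intervals $[\underline a,\overline a]$ with $\underline a\le\overline a$ in $\overline{\mathbb{R}}$, $a\in\overline{\mathbb{R}}$ identified with $[a,a]$. $\mathbb{A}(X)$ is the set of functions $X\to\mathbb{I}\overline{\mathbb{R}}$. $B_\delta(x)=\{y\in\Omega:\|x-y\|<\delta\}$. For dense $D\subseteq\Omega$ and $f\in\mathbb{A}(D)$: $I(D,\Omega,f)(x)=\sup_{\delta>0}\inf\{z\in f(y):y\in B_\delta(x)\cap D\}$, $S(D,\Omega,f)(x)=\inf_{\delta>0}\sup\{z\in f(y):y\in B_\delta(x)\cap D\}$, $F(D,\Omega,f)(x)=[I(D,\Omega,f)(x),S(D,\Omega,f)(x)]$; when $D=\Omega$ write $I(f),S(f)$. $f\in\mathbb{A}(\Omega)$ is D-continuous if $F(D,\Omega,f)=f$ for every dense subset $D$ of $\Omega$ (using the restriction of $f$ to $D$). *)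

(* Defs.v *)
From HB Require Import structures.
From mathcomp Require Import all_boot all_order all_algebra.
From mathcomp Require Import all_classical all_reals all_analysis.
Set Implicit Arguments. Unset Strict Implicit. Unset Printing Implicit Defensive.
Import Order.TTheory GRing.Theory Num.Theory.
Import numFieldNormedType.Exports.
Local Open Scope classical_set_scope.
Local Open Scope ring_scope.

(* An element of I(\bar R) is represented by the pair (lower, upper) of
   extended reals; a function in A(Omega) is f : 'rV[R]_n -> \bar R * \bar R,
   considered on Omega, with (f x).1 <= (f x).2 for x in Omega. *)

Section Defs.
Variables (R : realType) (n : nat).
Local Notation pt := 'rV[R]_n.

Definition vals (Om D : set pt) (f : pt -> \bar R * \bar R) (x : pt) (d : R)
  : set (\bar R) :=
  [set z | exists2 y, (Om y /\ D y /\ `|x - y| < d) &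
                      (((f y).1 <= z)%E /\ (z <= (f y).2)%E)].

Definition IopD (Om D : set pt) (f : pt -> \bar R * \bar R) (x : pt) : \bar R :=
  ereal_sup [set ereal_inf (vals Om D f x d) | d in [set d : R | 0 < d]].

Definition SopD (Om D : set pt) (f : pt -> \bar R * \bar R) (x : pt) : \bar R :=
  ereal_inf [set ereal_sup (vals Om D f x d) | d in [set d : R | 0 < d]].

Definition FopD (Om D : set pt) (f : pt -> \bar R * \bar R) (x : pt)
  : \bar R * \bar R := (IopD Om D f x, SopD Om D f x).

Definition Iop (Om : set pt) f := IopD Om Om f.
Definition Sop (Om : set pt) f := SopD Om Om f.

Definition degen (g : pt -> \bar R) : pt -> \bar R * \bar R := fun x => (g x, g x).

Definition dense_in (Om D : set pt) : Prop := D `<=` Om /\ Om `<=` closure D.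

Definition D_continuous (Om : set pt) (f : pt -> \bar R * \bar R) : Prop :=
  forall D, dense_in Om D -> forall x, Om x -> FopD Om D f x = f x.

Definition Gop (Om : set pt) (f : pt -> \bar R * \bar R) (x : pt)
  : \bar R * \bar R :=
  (Iop Om (degen (Sop Om (degen (Iop Om f)))) x,
   Sop Om (degen (Iop Om (degen (Sop Om f)))) x).

End Defs.

(* Main.v *)
Require Import Defs.
From HB Require Import structures.
From mathcomp Require Import all_boot all_order all_algebra.
From mathcomp Require Import all_classical all_reals all_analysis.
Import Order.TTheory GRing.Theory Num.Theory.
Import numFieldNormedType.Exports.
Local Open Scope classical_set_scope.
Local Open Scope ring_scope.

Set Implicit Arguments. Unset Strict Implicit.
Section Aux.
Variables (R : realType) (n : nat).
Local Notation pt := 'rV[R]_n.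
Implicit Types (Om D : set pt) (f h : pt -> \bar R * \bar R) (x y z : pt).

Definition ordf Om f := forall y, Om y -> ((f y).1 <= (f y).2)%E.

Lemma ordf_degen Om (g : pt -> \bar R) : ordf Om (degen g).
Proof. by move=> y _; rewrite /degen /=. Qed.

Lemma ballE' x e y : ball x e y <-> `|x - y| < e.
Proof. by rewrite -ball_normE. Qed.

Lemma ball_tri x y z (d e : R) : `|x - y| < d ->
  `|y - z| < Num.min e (d - `|x - y|) -> `|x - z| < d /\ `|y - z| < e.
Proof.
move=> xy; rewrite lt_min => /andP[yze yzd]; split => //.
apply: le_lt_trans (ler_distD y x z) _.
by rewrite -ltrBrDl.
Qed.

Lemma min_gt0 x y (d e : R) : `|x - y| < d -> 0 < e -> 0 < Num.min e (d - `|x - y|).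
Proof. by move=> xy e0; rewrite lt_min e0 subr_gt0. Qed.

Lemma ereal_dense (a b : \bar R) : (a < b)%E -> exists r, (a < r)%E /\ (r < b)%E.
Proof.
case: a => [a||]; case: b => [b||] //=.
- move=> ab; exists ((a + b) / 2)%:E; rewrite !lte_fin; apply/andP.
  by rewrite lte_fin in ab; rewrite !(midf_lt ab).
- by move=> _; exists (a + 1)%:E; rewrite !lte_fin ltrDl ltr01 ltry.
- by move=> _; exists (b - 1)%:E; rewrite !lte_fin ltrBlDr ltrDl ltr01 ltNye.
- by move=> _; exists 0%:E; rewrite ltNye ltey.
Qed.

Lemma inf_vals_le Om D f x d y : Om y -> D y -> `|x - y| < d ->
  ((f y).1 <= (f y).2)%E -> (ereal_inf (vals Om D f x d) <= (f y).1)%E.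
Proof. by move=> Oy Dy xy fy; apply: ereal_inf_lbound; exists y. Qed.

Lemma inf_vals_ge Om D f x d c :
  (forall y, Om y -> D y -> `|x - y| < d -> (c <= (f y).1)%E) ->
  (c <= ereal_inf (vals Om D f x d))%E.
Proof.
move=> H; apply: le_ereal_inf_tmp => z [y [Oy [Dy xy]] [h1 h2]].
exact: le_trans (H y Oy Dy xy) h1.
Qed.

Lemma I_ge Om D f x d c : 0 < d -> (c <= ereal_inf (vals Om D f x d))%E ->
  (c <= IopD Om D f x)%E.
Proof. by move=> d0 H; apply: le_trans H _; apply: ereal_sup_ubound; exists d. Qed.

Lemma I_le Om D f x c :
  (forall d, 0 < d -> (ereal_inf (vals Om D f x d) <= c)%E) ->
  (IopD Om D f x <= c)%E.
Proof. by move=> H; apply: ge_ereal_sup => _ [d d0 <-]; exact: H. Qed.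

Lemma I_self Om D f x : Om x -> D x -> ((f x).1 <= (f x).2)%E ->
  (IopD Om D f x <= (f x).1)%E.
Proof.
move=> Ox Dx fx; apply: I_le => d d0; apply: inf_vals_le => //.
by rewrite subrr normr0.
Qed.

Lemma I_monoD Om D D' f x : D `<=` D' -> (IopD Om D' f x <= IopD Om D f x)%E.
Proof.
move=> DD; apply: I_le => d d0; apply: (I_ge d0).
apply: ereal_inf_le_tmp => z [y [Oy [Dy xy]] h]; exists y => //; split => //.
by split => //; apply: DD.
Qed.

Lemma I_mono Om D f h x : ordf Om f ->
  (forall y, Om y -> ((f y).1 <= (h y).1)%E) -> (IopD Om D f x <= IopD Om D h x)%E.
Proof.
move=> hof fh; apply: I_le => d d0; apply: (I_ge d0); apply: inf_vals_ge.
move=> y Oy Dy xy; apply: le_trans (fh y Oy).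
by apply: inf_vals_le => //; apply: hof.
Qed.

Lemma I_ext Om D f h x : ordf Om f -> ordf Om h ->
  (forall y, Om y -> (f y).1 = (h y).1) -> IopD Om D f x = IopD Om D h x.
Proof.
move=> hof oh fh; apply/le_anti/andP; split; apply: I_mono => // y Oy.
  by rewrite fh.
by rewrite fh.
Qed.

Lemma I_idem Om f x : Om x -> ordf Om f ->
  Iop Om (degen (Iop Om f)) x = Iop Om f x.
Proof.
move=> Ox hof; apply/le_anti/andP; split.
  exact: (I_self (f := degen (Iop Om f)) Ox Ox (lexx _)).
apply: ge_ereal_sup => _ [d d0 <-].
apply: (I_ge d0); apply: inf_vals_ge => y Oy _ xy /=.
have d'0 : 0 < d - `|x - y| by rewrite subr_gt0.
apply: (I_ge d'0); apply: ereal_inf_le_tmp => t [z [Oz [_ yz]] ht].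
exists z => //; split => //; split => //.
apply: le_lt_trans (ler_distD y x z) _.
by rewrite -ltrBrDl.
Qed.

End Aux.
Section Main.
Variables (R : realType) (n : nat).
Local Notation pt := 'rV[R]_n.
Implicit Types (Om D : set pt) (f h : pt -> \bar R * \bar R) (x y z : pt).

Lemma S_self Om (w : pt -> \bar R) y : Om y -> (w y <= Sop Om (degen w) y)%E.
Proof.
move=> Oy; apply: le_ereal_inf_tmp => _ [e e0 <-].
apply: ereal_sup_ubound; exists y => //=; split => //; split => //.
by rewrite subrr normr0.
Qed.

Lemma LA Om f : ordf Om f -> D_continuous Om f ->
  forall x, Om x -> (Gop Om f x).1 = (f x).1.
Proof.
move=> hof Dc x Ox /=.
set w := Iop Om f.
have hw : forall y, Om y -> w y = (f y).1.
  move=> y Oy; have := Dc Om (conj (@subset_refl _ Om) (@subset_closure _ Om)) y Oy.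
  by rewrite /FopD => /(congr1 fst) /= <-.
apply/le_anti/andP; split; last first.
  rewrite -hw // -[w x](I_idem Ox hof) -/w.
  apply: I_mono; first exact: ordf_degen.
  by move=> y Oy /=; apply: S_self.
rewrite leNgt; apply/negP => H.
have [c [d d0 <-] hc] := ereal_sup_gt H.
have [r [hr1 hr2]] := ereal_dense hc.
pose D := [set y | Om y /\ (`|x - y| < d -> (r <= (f y).1)%E)].
have dD : dense_in Om D.
  split; first by move=> y [].
  move=> y Oy B /nbhs_ballP [e /= e0 sB].
  have [xy|xy] := pselect (`|x - y| < d); last first.
    by exists y; split; [split => // /xy | apply: sB; apply: ballxx].
  have rS : (r < Sop Om (degen w) y)%E.
    apply: lt_le_trans hr2 _; apply: ereal_inf_lbound; exists y => //.
  have e'0 := min_gt0 xy e0.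
  have : (r < ereal_sup (vals Om Om (degen w) y (Num.min e (d - `|x - y|))%R))%E.
    apply: lt_le_trans rS _; apply: ereal_inf_lbound; by exists (Num.min e (d - `|x - y|)).
  move=> /ereal_sup_gt [t [z [Oz [_ yz]] [t1 t2]] rt].
  have [xz yze] := ball_tri xy yz.
  exists z; split.
    split => // _; rewrite -hw //; apply/ltW; exact: lt_le_trans rt t2.
  by apply: sB; apply/ballE'.
have := Dc D dD x Ox; rewrite /FopD => -[] hI.
suff : (r <= (f x).1)%E by rewrite leNgt hr1.
rewrite -hI; apply: (I_ge d0); apply: inf_vals_ge => y Oy [_ h] xy; exact: h.
Qed.

Lemma LB Om f : ordf Om f ->
  (forall y, Om y -> (Gop Om f y).1 = (f y).1) ->
  forall D, dense_in Om D -> forall x, Om x -> IopD Om D f x = (f x).1.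
Proof.
move=> hof HG D [DO Dd] x Ox.
set w := Iop Om f.
set g := Sop Om (degen w).
have hw : forall y, Om y -> w y = (f y).1.
  move=> y Oy.
  have -> : w y = Iop Om (degen (Iop Om (degen g))) y.
    apply: I_ext; [exact: hof | exact: ordf_degen | ].
    by move=> z Oz /=; rewrite -(HG z Oz).
  by rewrite I_idem //; exact: HG.
apply/le_anti/andP; split; last first.
  by rewrite -hw //; apply: I_monoD.
rewrite -(HG x Ox) /= -/w -/g.
apply: I_le => d d0; apply: le_trans (I_ge d0 (lexx _)).
apply: le_ereal_inf_tmp => t [y [Oy [_ xy]] [t1 t2]].
apply: le_trans t1 => /=.
apply: le_ereal_inf_tmp => _ [e e0 <-].
have e'0 := min_gt0 xy e0.
have [z [Dz /ballE' yz]] := Dd y Oy _ (nbhsx_ballx y _ e'0).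
have [xz yze] := ball_tri xy yz.
have Oz := DO z Dz.
apply: le_trans (inf_vals_le Oz Dz xz (hof z Oz)) _.
rewrite -hw //; apply: ereal_sup_ubound; exists z => //=.
Qed.

End Main.
Section Dual.
Variables (R : realType) (n : nat).
Local Notation pt := 'rV[R]_n.
Implicit Types (Om D : set pt) (f h : pt -> \bar R * \bar R) (x y z : pt).

Definition negf f : pt -> \bar R * \bar R := fun y => (- (f y).2, - (f y).1)%E.

Lemma negfK f : negf (negf f) = f.
Proof. by apply: funext => y; rewrite /negf /= !oppeK; case: (f y). Qed.

Lemma negf_degen (g : pt -> \bar R) : negf (degen g) = degen (fun y => - g y)%E.
Proof. by []. Qed.

Lemma vals_neg Om D f x d : vals Om D (negf f) x d = -%E @` vals Om D f x d.
Proof.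
apply/seteqP; split => z.
  move=> [y hy [h1 h2]]; exists (- z)%E; last by rewrite oppeK.
  by exists y => //; split; [rewrite leeNr | rewrite leeNl].
move=> [t [y hy [h1 h2]] <-]; exists y => //=; split; by rewrite leeN2.
Qed.

Lemma SN Om D f : SopD Om D f = fun x => (- IopD Om D (negf f) x)%E.
Proof.
apply: funext => x; rewrite /IopD /SopD.
have -> : [set ereal_inf (vals Om D (negf f) x d) | d in [set d : R | 0 < d]] =
   -%E @` [set ereal_sup (vals Om D f x d) | d in [set d : R | 0 < d]].
  apply/seteqP; split => z.
    move=> [d d0 <-]; exists (ereal_sup (vals Om D f x d)); first by exists d.
    by rewrite vals_neg ereal_infN.
  move=> [_ [d d0 <-] <-]; exists d => //; by rewrite vals_neg ereal_infN.
by rewrite ereal_supN oppeK.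
Qed.

Lemma IN Om D f : IopD Om D f = fun x => (- SopD Om D (negf f) x)%E.
Proof.
apply: funext => x; by rewrite SN negfK oppeK.
Qed.

Lemma Gop2 Om f x : (Gop Om f x).2 = (- (Gop Om (negf f) x).1)%E.
Proof.
rewrite /Gop /= /Sop /Iop.
rewrite [in LHS]SN negf_degen.
congr (- IopD _ _ (degen _) x)%E.
rewrite [in RHS]SN; apply: funext => y; congr (- _)%E.
rewrite negf_degen; congr (IopD _ _ (degen _) y).
exact: SN.
Qed.

End Dual.

Unset Implicit Arguments. Set Strict Implicit.
Theorem theorem13 (R : realType) (n : nat) (Om : set 'rV[R]_n)
  (f : 'rV[R]_n -> \bar R * \bar R) :
  open Om ->
  (forall x, Om x -> ((f x).1 <= (f x).2)%E) ->
  (D_continuous Om f <-> (forall x, Om x -> Gop Om f x = f x)).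
Proof.
move=> _ hof.
have hon : ordf Om (negf f).
  by move=> y Oy; rewrite /negf /= leeN2; apply: hof.
have pairE : forall (p q : \bar R * \bar R), p.1 = q.1 -> p.2 = q.2 -> p = q.
  by move=> [? ?] [? ?] /= -> ->.
split.
  move=> Dc.
  have Dcn : D_continuous Om (negf f).
    move=> D dD x Ox; have E := Dc D dD x Ox.
    have h1 := congr1 fst E; have h2 := congr1 snd E; rewrite /FopD /= in h1 h2.
    apply: pairE => /=.
      by rewrite (IN Om D (negf f)) /= negfK h2.
    by rewrite (SN Om D (negf f)) /= negfK h1.
  move=> x Ox; apply: pairE.
    exact: LA.
  by rewrite Gop2 (LA hon Dcn Ox) /negf /= oppeK.
move=> HG D dD x Ox; apply: pairE => /=.
  apply: LB => // y Oy; by rewrite HG.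
rewrite (SN Om D f) (LB hon _ dD Ox) /negf /= ?oppeK //.
move=> y Oy; apply: oppe_inj.
by rewrite -Gop2 HG // /negf /= oppeK.
Qed.
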